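(* Let $\Gamma$ be a uniform layered graph with unique minimal vertex. Then $B(\Gamma)\cong(\operatorname{gr}A(\Gamma))^!$, the isomorphism being induced by $v^*\mapsto v$ for $v\in V_+$.
   Context: A layered graph is a finite directed graph $\Gamma=(V,E)$ with $V=\bigsqcup_{i=0}^{N}V_i$ such that every edge from $V_i$ goes to $V_{i-1}$; $V_+=\bigsqcup_{i\ge1}V_i$, $V_{\ge k}=\bigsqcup_{i\ge k}V_i$, $S(v)=\{w:(v,w)\in E\}$, nonempty for $v\in V_+$, $|V_0|=1$. $\Gamma$ is uniform if for every $v\in V_{\ge2}$ the elements of $S(v)$ form a single class under the transitive closure of $w\approx u$ iff $S(w)\cap S(u)\neq\emptyset$. For such $\Gamma$ one has $\operatorname{gr}A(\Gamma)\cong T(W)/\langle R\rangle$ with $W=\operatorname{span}V_+$ and $R=\operatorname{span}\{v\otimes(u-w): v\in V_{\ge2}, u,w\in S(v)\}\subseteq W\otimes W$. For a quadratic algebra $T(W)/\langle R\rangle$, its quadratic dual is $T(W^* )/\langle R^\perp\rangle$, where $R^\perp\subseteq W^*\otimes W^*$ is the set of elements annihilating $R$ under the pairing $\langle x\otimes y,v\otimes w\rangle=x(v)y(w)$; $\{v^*\}$ is the dual basis to $V_+$. $B(\Gamma)=T(V_+)/R_B$ over a field $\mathbb F$, where $R_B$ is the two-sided ideal generated by $\{vw: v,w\in V_+,(v,w)\notin E\}\cup\{v\sum_{w\in S(v)}w: v\in V_{\ge2}\}$. *)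

(* Defs.v *)
From HB Require Import structures.
From mathcomp Require Import all_boot all_order all_algebra.
Set Implicit Arguments. Unset Strict Implicit. Unset Printing Implicit Defensive.
Import GRing.Theory.
Local Open Scope ring_scope.

(* Free associative algebra T(X) over a field F on a finite alphabet X *)
(* An element is a formal finite sum  sum_i c_i * w_i  of words w_i,   *)
(* represented by a list of (coefficient, word) pairs; two such lists  *)
(* denote the same element iff they have the same coefficient on every *)
(* word (nceq).                                                        *)
Section FreeAlgebra.
Variables (F : fieldType) (X : finType).

Definition ncpoly := seq (F * seq X).

Definition nccoef (p : ncpoly) (w : seq X) : F :=
  \sum_(t <- p) (if t.2 == w then t.1 else 0).

Definition nceq (p q : ncpoly) : Prop := forall w, nccoef p w = nccoef q w.

Definition ncmul (p q : ncpoly) : ncpoly :=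
  [seq (s.1 * t.1, s.2 ++ t.2) | s <- p, t <- q].

Definition ncmon (w : seq X) : ncpoly := [:: (1, w)].

Definition in_ideal (S : ncpoly -> Prop) (f : ncpoly) : Prop :=
  exists l : seq (ncpoly * ncpoly * ncpoly),
    (forall t, t \in l -> S t.1.2) /\
    nceq f (flatten [seq ncmul (ncmul t.1.1 t.1.2) t.2 | t <- l]).

(* Elements of X (x) X (or of X* (x) X*, coordinates in the dual basis)
   are coefficient functions X -> X -> F; phi2 c is the corresponding
   degree-2 element  sum_{x,y} c x y * x y  of T(X). *)
Definition phi2 (c : X -> X -> F) : ncpoly :=
  [seq (c x y, [:: x; y]) | x <- enum X, y <- enum X].

End FreeAlgebra.

(* V finite vertex type, lvl v = i iff v \in V_i, E the edge relation. *)
Definition layered (V : finType) (lvl : V -> nat) (E : rel V) : Prop :=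
  (forall v w, E v w -> (0 < lvl v)%N /\ lvl w = (lvl v).-1) /\
  (forall v, (0 < lvl v)%N -> exists w, E v w) /\
  #|[pred v | lvl v == 0%N]| = 1%N.

Definition simrel (V : finType) (E : rel V) (v : V) : rel V :=
  fun w u => [&& E v w, E v u & [exists x, E w x && E u x]].

Definition uniform (V : finType) (lvl : V -> nat) (E : rel V) : Prop :=
  forall v, (1 < lvl v)%N ->
    forall u w, E v u -> E v w -> connect (simrel E v) u w.

Definition Vp (V : finType) (lvl : V -> nat) : finType :=
  {v : V | (0 < lvl v)%N}.

Section Algebras.
Variables (F : fieldType) (V : finType) (lvl : V -> nat) (E : rel V).
Local Notation X := (Vp lvl).

(* generator v (x) (u - w) of R, as coefficient function on V_+ x V_+ *)
Definition Rgen (t : X * X * X) : X -> X -> F :=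
  fun x y => (x == t.1.1)%:R * ((y == t.1.2)%:R - (y == t.2)%:R).

Definition Rgen_ok (t : X * X * X) : bool :=
  [&& (1 < lvl (val t.1.1))%N, E (val t.1.1) (val t.1.2) & E (val t.1.1) (val t.2)].

Definition in_R (r : X -> X -> F) : Prop :=
  exists l : seq (F * (X * X * X)),
    (forall t, t \in l -> Rgen_ok t.2) /\
    forall x y, r x y = \sum_(t <- l) t.1 * Rgen t.2 x y.

(* R^perp in W* (x) W*, for the pairing <x*(x)y*, v(x)w> = x*(v) y*(w) *)
Definition in_Rperp (c : X -> X -> F) : Prop :=
  forall r, in_R r -> \sum_(x : X) \sum_(y : X) c x y * r x y = 0.

(* Generators of <R^perp>, transported to T(V_+) along v^* |-> v. *)
Definition dual_gens (p : ncpoly F X) : Prop :=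
  exists c, in_Rperp c /\ p = phi2 c.

Definition B_gens (p : ncpoly F X) : Prop :=
  (exists v w : X, ~~ E (val v) (val w) /\ p = ncmon F [:: v; w]) \/
  (exists v : X, (1 < lvl (val v))%N /\
     p = [seq (1, [:: v; w]) | w <- enum X & E (val v) (val w)]).

End Algebras.

(* Main.v *)
Require Import Defs.
From HB Require Import structures.
From mathcomp Require Import all_boot all_order all_algebra.
Set Implicit Arguments. Unset Strict Implicit. Unset Printing Implicit Defensive.
Import GRing.Theory.
Local Open Scope ring_scope.

Section NC.
Variables (F : fieldType) (X : finType).
Implicit Types (p q r : ncpoly F X) (w : seq X).

Lemma cat_split (a b w : seq X) (k : F) :
  (if a ++ b == w then k else 0) =
  \sum_(i < (size w).+1) (if (take i w == a) && (drop i w == b) then k else 0).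
Proof.
case: eqP => [<-|ne].
  have Hs : (size a < (size (a ++ b)).+1)%N by rewrite size_cat ltnS leq_addr.
  rewrite (bigD1 (Ordinal Hs)) //= take_size_cat // drop_size_cat // !eqxx /=.
  rewrite big1 ?addr0 // => i ne_i.
  case: andP => [[/eqP ta _]|] //.
  have : size (take i (a ++ b)) = i by rewrite size_takel // -ltnS ltn_ord.
  rewrite ta => si; case/negP: ne_i; apply/eqP/val_inj => /=; by rewrite si.
rewrite big1 // => i _; case: andP => [[/eqP ta /eqP db]|//].
by case: ne; rewrite -ta -db cat_take_drop.
Qed.

Lemma coef_mul_gen p q w : nccoef (ncmul p q) w =
  \sum_(s <- p) \sum_(t <- q) (if s.2 ++ t.2 == w then s.1 * t.1 else 0).
Proof. by rewrite /nccoef /ncmul big_allpairs_dep. Qed.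

Lemma coef_mul p q w : nccoef (ncmul p q) w =
  \sum_(i < (size w).+1) nccoef p (take i w) * nccoef q (drop i w).
Proof.
rewrite coef_mul_gen.
under eq_bigr do rewrite (eq_bigr _ (fun t _ => cat_split _ _ _ _)) exchange_big /=.
rewrite exchange_big /=; apply: eq_bigr => i _.
rewrite /nccoef big_distrl /=; apply: eq_bigr => s _.
rewrite big_distrr /=; apply: eq_bigr => t _.
by rewrite [s.2 == _]eq_sym [t.2 == _]eq_sym; do 2 case: eqP => _ /=; rewrite ?mulr0 ?mul0r.
Qed.

Lemma coef_cat p q w : nccoef (p ++ q) w = nccoef p w + nccoef q w.
Proof. by rewrite /nccoef big_cat. Qed.

Lemma coef_nil w : nccoef [::] w = 0 :> F.
Proof. by rewrite /nccoef big_nil. Qed.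

Lemma coef_congr_mul p p' q q' : nceq p p' -> nceq q q' -> nceq (ncmul p q) (ncmul p' q').
Proof. by move=> Hp Hq w; rewrite !coef_mul; apply: eq_bigr => i _; rewrite Hp Hq. Qed.

Lemma nceq_refl p : nceq p p. Proof. by []. Qed.
Lemma nceq_sym p q : nceq p q -> nceq q p. Proof. by move=> H w. Qed.
Lemma nceq_trans p q r : nceq p q -> nceq q r -> nceq p r.
Proof. by move=> H1 H2 w; rewrite H1 H2. Qed.

Lemma mulDl p1 p2 q : nceq (ncmul (p1 ++ p2) q) (ncmul p1 q ++ ncmul p2 q).
Proof. by move=> w; rewrite coef_cat !coef_mul -big_split; apply: eq_bigr => i _; rewrite coef_cat mulrDl. Qed.

Lemma mulDr p q1 q2 : nceq (ncmul p (q1 ++ q2)) (ncmul p q1 ++ ncmul p q2).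
Proof. by move=> w; rewrite coef_cat !coef_mul -big_split; apply: eq_bigr => i _; rewrite coef_cat mulrDr. Qed.

Lemma mul0l q : nceq (ncmul [::] q) [::].
Proof. by []. Qed.

Lemma mul0r' p : nceq (ncmul p [::]) [::].
Proof. by move=> w; rewrite (coef_mul p [::]) coef_nil big1 // => i _; rewrite coef_nil mulr0. Qed.

Lemma mulA (a b c : ncpoly F X) : nceq (ncmul (ncmul a b) c) (ncmul a (ncmul b c)).
Proof.
move=> w; rewrite !coef_mul_gen /ncmul big_allpairs_dep /=.
apply: eq_bigr => s _; rewrite big_allpairs_dep /=.
apply: eq_bigr => t _; apply: eq_bigr => u _.
by rewrite catA mulrA.
Qed.

Lemma cat_congr p p' q q' : nceq p p' -> nceq q q' -> nceq (p ++ q) (p' ++ q').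
Proof. by move=> H1 H2 w; rewrite !coef_cat H1 H2. Qed.

Definition igen (l : seq (ncpoly F X * ncpoly F X * ncpoly F X)) :=
  flatten [seq ncmul (ncmul t.1.1 t.1.2) t.2 | t <- l].

Lemma igen_cons t l : igen (t :: l) = ncmul (ncmul t.1.1 t.1.2) t.2 ++ igen l.
Proof. by []. Qed.

Lemma igen_cat l1 l2 : igen (l1 ++ l2) = igen l1 ++ igen l2.
Proof. by rewrite /igen map_cat flatten_cat. Qed.

Section Ideal.
Variable S : ncpoly F X -> Prop.

Lemma ideal_nceq f g : nceq f g -> in_ideal S g -> in_ideal S f.
Proof. move=> H [l [Hl H2]]; exists l; split => //; exact: nceq_trans H H2. Qed.

Lemma ideal_cat f g : in_ideal S f -> in_ideal S g -> in_ideal S (f ++ g).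
Proof.
move=> [l1 [H1 E1]] [l2 [H2 E2]]; exists (l1 ++ l2); split.
  by move=> t; rewrite mem_cat => /orP [] ?; [apply: H1|apply: H2].
by rewrite -/(igen _) igen_cat; apply: cat_congr.
Qed.

Lemma ideal_nil : in_ideal S [::].
Proof. by exists [::]; split. Qed.

Lemma mul1l p : nceq (ncmul (ncmon F [::]) p) p.
Proof.
move=> w; rewrite coef_mul_gen big_cons big_nil addr0 /=.
by apply: eq_bigr => t _; rewrite mul1r.
Qed.

Lemma mul1r' p : nceq (ncmul p (ncmon F [::])) p.
Proof.
move=> w; rewrite coef_mul_gen; apply: eq_bigr => t _.
by rewrite big_cons big_nil addr0 /= cats0 mulr1.
Qed.

Lemma ideal_gen g : S g -> in_ideal S g.
Proof.
move=> Sg; exists [:: (ncmon F [::], g, ncmon F [::])]; split.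
  by move=> t; rewrite inE => /eqP ->.
rewrite -/(igen _) igen_cons /igen /= cats0.
apply: nceq_sym; apply: nceq_trans (mul1r' _) _; exact: mul1l.
Qed.
Lemma igen_mul a b l :
  nceq (ncmul (ncmul a (igen l)) b)
       (igen [seq (ncmul a t.1.1, t.1.2, ncmul t.2 b) | t <- l]).
Proof.
elim: l => [|t l IH] /=.
  rewrite /igen /=; apply: nceq_trans (coef_congr_mul (mul0r' a) (nceq_refl b)) _.
  exact: mul0l.
rewrite igen_cons /= -/(igen _).
apply: nceq_trans (coef_congr_mul (mulDr _ _ _) (nceq_refl b)) _.
apply: nceq_trans (mulDl _ _ _) _; apply: cat_congr => //.
case: t => [[x s] y] /=.
apply: nceq_trans (coef_congr_mul (nceq_sym (mulA _ _ _)) (nceq_refl b)) _.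
apply: nceq_trans (mulA _ _ _) _.
apply: coef_congr_mul (nceq_refl _).
exact: nceq_sym (mulA _ _ _).
Qed.

Lemma ideal_mul a b f : in_ideal S f -> in_ideal S (ncmul (ncmul a f) b).
Proof.
move=> [l [Hl Ef]]; exists [seq (ncmul a t.1.1, t.1.2, ncmul t.2 b) | t <- l]; split.
  by move=> t /mapP [u ul ->] /=; apply: Hl.
rewrite -/(igen _); apply: nceq_trans (igen_mul a b l).
exact: coef_congr_mul (coef_congr_mul (nceq_refl _) Ef) (nceq_refl _).
Qed.
End Ideal.
Lemma ideal_mono (S1 S2 : ncpoly F X -> Prop) :
  (forall g, S1 g -> in_ideal S2 g) -> forall f, in_ideal S1 f -> in_ideal S2 f.
Proof.
move=> H f [l [Hl Ef]]; apply: (@ideal_nceq S2 _ _ Ef); rewrite -/(igen _).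
clear Ef; elim: l Hl => [|t l IH] Hl; first exact: ideal_nil.
rewrite igen_cons; apply: ideal_cat; last by apply: IH => u ul; apply: Hl; rewrite inE ul orbT.
by apply: ideal_mul; apply: H; apply: Hl; rewrite inE eqxx.
Qed.
End NC.
Section G.
Variables (F : fieldType) (V : finType) (lvl : V -> nat) (E : rel V).
Local Notation X := (Vp lvl).

Lemma sum_deltar (f : X -> F) a : \sum_y f y * (y == a)%:R = f a.
Proof.
rewrite (bigD1 a) //= eqxx mulr1 big1 ?addr0 // => y ne.
by rewrite (negbTE ne) mulr0.
Qed.

Lemma sum_deltal (f : X -> F) a : \sum_y (y == a)%:R * f y = f a.
Proof. by rewrite -[RHS](sum_deltar f a); apply: eq_bigr => y _; rewrite mulrC. Qed.

Lemma coef_phi2 (c : X -> X -> F) w :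
  nccoef (phi2 c) w = if w is [:: x; y] then c x y else 0.
Proof.
rewrite /nccoef /phi2 big_allpairs_dep /=.
case: w => [|x0 [|y0 [|z w]]].
- by rewrite big1 // => x _; rewrite big1 // => y _.
- by rewrite big1 // => x _; rewrite big1 // => y _; case: eqP => // /(congr1 size).
- have inner x : \sum_(y <- enum X) (if [:: x; y] == [:: x0; y0] then c x y else 0)
      = if x == x0 then c x y0 else 0.
    rewrite (bigD1_seq y0) ?mem_enum ?enum_uniq //= big1_seq ?addr0.
      by rewrite !eqseq_cons eqxx andbT.
    by move=> y /andP [ne _]; rewrite !eqseq_cons (negbTE ne) andbF.
  under eq_bigr do rewrite inner.
  rewrite (bigD1_seq x0) ?mem_enum ?enum_uniq //= eqxx big1_seq ?addr0 //.
  by move=> y /andP [ne _]; rewrite (negbTE ne).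
- by rewrite big1 // => x _; rewrite big1 // => y _; case: eqP => // /(congr1 size) /eqP.
Qed.

Lemma coef_mon (u w : seq X) : nccoef (ncmon F u) w = (u == w)%:R.
Proof. by rewrite /nccoef big_cons big_nil addr0 /=; case: eqP. Qed.

Definition Bsum (v : X) : ncpoly F X :=
  [seq (1, [:: v; w]) | w <- enum X & E (val v) (val w)].

Lemma coef_Bsum v w : nccoef (Bsum v) w =
  if w is [:: x; y] then ((x == v) && E (val v) (val y))%:R else 0.
Proof.
rewrite /nccoef /Bsum big_map big_filter /=.
case: w => [|x0 [|y0 [|z w]]].
- by rewrite big1 // => y _; case: eqP => // /(congr1 size).
- by rewrite big1 // => y _; case: eqP => // /(congr1 size).
- rewrite big_mkcond /= (bigD1_seq y0) ?mem_enum ?enum_uniq //= big1_seq ?addr0; last first.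
    by move=> y /andP [ne _]; rewrite !eqseq_cons (negbTE ne) andbF; case: ifP.
  rewrite !eqseq_cons eqxx andbT [v == x0]eq_sym.
  by case: (x0 == v); case: (E _ _).
- by rewrite big1 // => y _; case: eqP => // /(congr1 size) /eqP.
Qed.

Definition scl (a : F) (g : ncpoly F X) : ncpoly F X :=
  ncmul (ncmul [:: (a, [::])] g) (ncmon F [::]).

Lemma coef_scl a g w : nccoef (scl a g) w = a * nccoef g w.
Proof.
rewrite /scl mul1r' coef_mul_gen big_cons big_nil addr0 /= mulr_sumr.
by apply: eq_bigr => t _; rewrite /=; case: ifP; rewrite ?mulr0.
Qed.

End G.
Section G2.
Variables (F : fieldType) (V : finType) (lvl : V -> nat) (E : rel V).
Local Notation X := (Vp lvl).

Lemma Rperp_of (c : X -> X -> F) :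
  (forall t, Rgen_ok E t -> \sum_x \sum_y c x y * Rgen F t x y = 0) -> in_Rperp E c.
Proof.
move=> H r [l [Hl Hr]].
under eq_bigr => x _ do under eq_bigr => y _ do rewrite Hr mulr_sumr.
under eq_bigr => x _ do rewrite exchange_big /=.
rewrite exchange_big /=; apply: big1_seq => t /andP [_ /Hl ok].
transitivity (t.1 * \sum_x \sum_y c x y * Rgen F t.2 x y); last by rewrite H // mulr0.
rewrite mulr_sumr; apply: eq_bigr => x _; rewrite mulr_sumr; apply: eq_bigr => y _.
by rewrite mulrCA.
Qed.

Lemma Rperp_rgen (c : X -> X -> F) : in_Rperp E c ->
  forall v u w : X, (1 < lvl (val v))%N -> E (val v) (val u) -> E (val v) (val w) ->
  c v u = c v w.
Proof.
move=> H v u w l2 e1 e2; apply/eqP; rewrite -subr_eq0; apply/eqP.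
have := H (Rgen F (v, u, w)); rewrite /Rgen /=.
have -> : \sum_x \sum_y c x y * ((x == v)%:R * ((y == u)%:R - (y == w)%:R)) =
   \sum_x (x == v)%:R * \sum_y c x y * ((y == u)%:R - (y == w)%:R).
  by apply: eq_bigr => x _; rewrite mulr_sumr; apply: eq_bigr => y _; rewrite mulrCA.
rewrite sum_deltal.
under eq_bigr do rewrite mulrBr.
rewrite sumrB !sum_deltar; apply.
exists [:: (1, (v, u, w))]; split.
  by move=> t; rewrite inE => /eqP -> /=; rewrite /Rgen_ok /= l2 e1 e2.
by move=> x y; rewrite big_cons big_nil addr0 mul1r.
Qed.

Lemma natr_andb (a b : bool) : (a && b)%:R = a%:R * b%:R :> F.
Proof. by case: a; case: b; rewrite ?mul1r ?mul0r. Qed.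

Lemma B_in_dual g : @B_gens F V lvl E g -> in_ideal (@dual_gens F V lvl E) g.
Proof.
case=> [[v [w [ne ->]]] | [v [l2 ->]]].
- pose c := fun x y : X => ((x == v) && (y == w))%:R : F.
  apply: (@ideal_nceq _ _ _ _ (phi2 c)); last first.
    apply: ideal_gen; exists c; split => //.
    apply: Rperp_of => -[[t1 t2] t3] /and3P [_ /= e1 e2].
    have -> : \sum_x \sum_y c x y * Rgen F (t1, t2, t3) x y =
      \sum_x (x == v)%:R * \sum_y (y == w)%:R * Rgen F (t1, t2, t3) x y.
      apply: eq_bigr => x _; rewrite mulr_sumr; apply: eq_bigr => y _.
      by rewrite /c natr_andb mulrA.
    rewrite sum_deltal sum_deltal /Rgen /=.
    case: (eqVneq v t1) => [vt|nev]; last by rewrite mul0r.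
    rewrite -vt in e1 e2.
    have -> : (w == t2) = false by apply/negbTE; apply: contraNneq ne => ->.
    have -> : (w == t3) = false by apply/negbTE; apply: contraNneq ne => ->.
    by rewrite subrr mulr0.
  move=> w'; rewrite coef_mon coef_phi2 /c.
  case: w' => [|x0 [|y0 [|z w']]].
  - by case: eqP => // /(congr1 size).
  - by case: eqP => // /(congr1 size).
  - by rewrite !eqseq_cons andbT ![v == _]eq_sym ![w == _]eq_sym.
  - by case: eqP => // /(congr1 size) /eqP.
- pose c := fun x y : X => ((x == v) && E (val v) (val y))%:R : F.
  apply: (@ideal_nceq _ _ _ _ (phi2 c)); last first.
    apply: ideal_gen; exists c; split => //.
    apply: Rperp_of => -[[t1 t2] t3] /and3P [_ /= e1 e2].
    have -> : \sum_x \sum_y c x y * Rgen F (t1, t2, t3) x y =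
      \sum_x (x == v)%:R * \sum_y (E (val v) (val y))%:R * Rgen F (t1, t2, t3) x y.
      apply: eq_bigr => x _; rewrite mulr_sumr; apply: eq_bigr => y _.
      by rewrite /c natr_andb mulrA.
    rewrite sum_deltal /Rgen /=.
    case: (eqVneq v t1) => [vt|nev]; last first.
      by rewrite big1 // => y _; rewrite mul0r mulr0.
    rewrite -vt in e1 e2.
    under eq_bigr do rewrite mul1r mulrBr.
    by rewrite sumrB !sum_deltar e1 e2 subrr.
  move=> w'; rewrite -/(Bsum F E v) coef_Bsum coef_phi2 /c.
  by case: w' => [|x0 [|y0 [|z w']]].
Qed.

Lemma ideal_flatten (S : ncpoly F X -> Prop) (L : seq (ncpoly F X)) :
  (forall f, f \in L -> in_ideal S f) -> in_ideal S (flatten L).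
Proof.
elim: L => [|f L IH] H /=; first exact: ideal_nil.
apply: ideal_cat; first by apply: H; rewrite inE eqxx.
by apply: IH => g gL; apply: H; rewrite inE gL orbT.
Qed.

Lemma coef_flatten (L : seq (ncpoly F X)) w :
  nccoef (flatten L) w = \sum_(f <- L) nccoef f w.
Proof. by rewrite /nccoef big_flatten. Qed.

Lemma coef_if (b : bool) (g : ncpoly F X) w :
  nccoef (if b then [::] else g) w = if b then 0 else nccoef g w.
Proof. by case: b; rewrite // /nccoef big_nil. Qed.

Lemma coef_if' (b : bool) (g : ncpoly F X) w :
  nccoef (if b then g else [::]) w = if b then nccoef g w else 0.
Proof. by case: b; rewrite // /nccoef big_nil. Qed.

Lemma dual_in_B g : layered lvl E -> @dual_gens F V lvl E g -> in_ideal (@B_gens F V lvl E) g.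
Proof.
move=> [lay1 _] [c [Hc ->]].
pose cp := fun x : X => if [pick y | E (val x) (val y)] is Some y then c x y else 0.
pose P1 := flatten [seq (if E (val x) (val y) then [::]
                         else scl (c x y) (ncmon F [:: x; y])) | x <- enum X, y <- enum X].
pose P2 := flatten [seq (if (1 < lvl (val x))%N then scl (cp x) (Bsum F E x) else [::])
                   | x <- enum X].
apply: (@ideal_nceq _ _ _ _ (P1 ++ P2)); last first.
  apply: ideal_cat.
    apply: ideal_flatten => f /allpairsP [[x y] [_ _ ->]] /=.
    case: ifP => [_|ne]; first exact: ideal_nil.
    apply: ideal_mul; apply: ideal_gen; left; exists x, y; split => //; by rewrite ne.
  apply: ideal_flatten => f /mapP [x _ ->].
  case: ifP => [l2|_]; last exact: ideal_nil.
  by apply: ideal_mul; apply: ideal_gen; right; exists x; split.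
move=> w; rewrite coef_phi2 coef_cat /P1 /P2 !coef_flatten big_map big_allpairs_dep.
under eq_bigr do under eq_bigr do rewrite coef_if coef_scl coef_mon.
under [X in _ = _ + X]eq_bigr do rewrite coef_if' coef_scl coef_Bsum.
case: w => [|x0 [|y0 [|z w]]].
- rewrite big1 ?add0r ?big1 // => x _; first by case: ifP; rewrite ?mulr0.
  by rewrite big1 // => y _; case: ifP => //; rewrite mulr0.
- rewrite big1 ?add0r ?big1 // => x _; first by case: ifP; rewrite ?mulr0.
  rewrite big1 // => y _; case: ifP => // _.
  by case: eqP; rewrite ?mulr0 // => /(congr1 size).
- have inner x : \sum_(y <- enum X) (if E (val x) (val y) then 0
      else c x y * ([:: x; y] == [:: x0; y0])%:R)
      = if x == x0 then (if E (val x) (val y0) then 0 else c x y0) else 0.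
    rewrite (bigD1_seq y0) ?mem_enum ?enum_uniq //= big1_seq ?addr0.
      rewrite !eqseq_cons eqxx andbT.
      by case: eqP => _; case: ifP; rewrite ?mulr0 ?mulr1.
    move=> y /andP [ne _]; rewrite !eqseq_cons (negbTE ne) andbF mulr0.
    by case: ifP.
  under eq_bigr do rewrite inner.
  rewrite (bigD1_seq x0) ?mem_enum ?enum_uniq //= eqxx big1_seq ?add0r ?addr0; last first.
    by move=> y /andP [ne _]; rewrite (negbTE ne).
  rewrite (bigD1_seq x0) ?mem_enum ?enum_uniq //= eqxx big1_seq ?addr0; last first.
    by move=> y /andP [ne _]; rewrite eq_sym (negbTE ne) /=; case: ifP; rewrite ?mulr0.
  case e: (E (val x0) (val y0)); last by rewrite /= mulr0; case: ifP => _; rewrite addr0.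
  have l2 : (1 < lvl (val x0))%N.
    have [h1 h2] := lay1 _ _ e; have := valP y0; rewrite /= h2.
    by case: (lvl (val x0)) h1 => [|[|n]].
  rewrite l2 mulr1 add0r /cp.
  case: pickP => [y1 e1|none]; first by apply: (Rperp_rgen Hc)...
  by have := none y0; rewrite e.
- rewrite big1 ?add0r ?big1 // => x _; first by case: ifP; rewrite ?mulr0.
  rewrite big1 // => y _; case: ifP => // _.
  by case: eqP; rewrite ?mulr0 // => /(congr1 size) /eqP.
Qed.

End G2.

Theorem mainTheorem7 (F : fieldType) (V : finType) (lvl : V -> nat) (E : rel V) :
  layered lvl E -> uniform lvl E ->
  forall p : ncpoly F (Vp lvl),
    in_ideal (@B_gens F V lvl E) p <-> in_ideal (@dual_gens F V lvl E) p.
Proof.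
move=> lay _ p; split; apply: ideal_mono.
- exact: B_in_dual.
- by move=> g; apply: dual_in_B.
Qed.
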